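(* Let $\mathcal{O}\subset\mathbb{R}^n$ be open, let $V:\mathcal{O}\to\mathbb{R}$ be locally Lipschitz, let $F:\mathcal{O}\rightrightarrows\mathbb{R}^n$ be inner semicontinuous and locally bounded in $\mathcal{O}$, let $\mathcal{A}\subset\mathbb{R}^n$ be closed and let $\gamma:\mathbb{R}_{\geq 0}\to\mathbb{R}$ be continuous. Suppose that $$\langle \nabla V(y), f\rangle \leq \gamma(|y|_\mathcal{A})\quad \text{for all } y\in\mathcal{O}\setminus\mathcal{N}_V \text{ and all } f\in F(y).$$ Then $$\langle v, f\rangle\leq \gamma(|x|_\mathcal{A})\quad\text{for all } x\in\mathcal{O},\ \text{all } v\in\partial V(x),\ \text{all } f\in F(x).$$
   Context: $|x|_\mathcal{A}=\min_{y\in\mathcal{A}}|x-y|$ is the Euclidean distance to $\mathcal{A}$. $\mathcal{N}_V:=\{x\in\mathcal{O}: \nabla V(x)\text{ does not exist}\}$. The Clarke generalized gradient is $\partial V(x):=\mathrm{co}\{v\in\mathbb{R}^n: \exists x_k\to x,\ x_k\notin\mathcal{N}_V,\ v=\lim_k\nabla V(x_k)\}$. A set-valued map $F:\mathcal{C}\rightrightarrows\mathbb{R}^n$ is inner semicontinuous relative to $\mathcal{C}$ at $x\in\mathcal{C}$ if for every $f\in F(x)$ and every sequence $x_k\in\mathcal{C}$ with $x_k\to x$ there exist $f_k\in F(x_k)$ with $f_k\to f$; it is inner semicontinuous in $\mathcal{C}$ if this holds at every $x\in\mathcal{C}$. $F$ is locally bounded in $\mathcal{C}$ if every $x\in\mathcal{C}$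 has a neighborhood $\mathcal{U}$ with $F(\mathcal{U}\cap\mathcal{C})$ bounded. *)

(* Defs.v *)
From HB Require Import structures.
From mathcomp Require Import all_boot all_order all_algebra.
From mathcomp Require Import all_classical all_reals all_analysis.
Set Implicit Arguments. Unset Strict Implicit. Unset Printing Implicit Defensive.
Import Order.TTheory GRing.Theory Num.Theory.
Import numFieldNormedType.Exports.
Local Open Scope classical_set_scope.
Local Open Scope ring_scope.

Section Defs.
Variables (R : realType) (n : nat).
Notation vec := 'rV[R]_n.

Definition dotp (u v : vec) : R := \sum_(i < n) u 0 i * v 0 i.
Definition enorm (u : vec) : R := Num.sqrt (dotp u u).

Definition dist_set (A : set vec) (x : vec) : R :=
  inf [set enorm (x - y) | y in A].

(* Gradient of V at x (meaningful when V is differentiable at x):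
   the vector of partial derivatives, i.e. of the Frechet derivative
   evaluated at the canonical basis vectors. *)
Definition grad (V : vec -> R) (x : vec) : vec :=
  \row_(i < n) ('d V x) (delta_mx 0 i).

Definition nondiff_set (O : set vec) (V : vec -> R) : set vec :=
  [set x | O x /\ ~ differentiable V x].

Definition conv_hull (S : set vec) : set vec :=
  [set v | exists (m : nat) (w : 'I_m -> R) (p : 'I_m -> vec),
      (forall i, 0 <= w i) /\ \sum_(i < m) w i = 1 /\
      (forall i, S (p i)) /\ v = \sum_(i < m) w i *: p i].

Definition clarke_grad (O : set vec) (V : vec -> R) (x : vec) : set vec :=
  conv_hull [set v | exists xk : nat -> vec,
     xk @ \oo --> x /\ (forall k, O (xk k) /\ ~ nondiff_set O V (xk k)) /\
     (fun k => grad V (xk k)) @ \oo --> v].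

Definition locally_lipschitz_on (O : set vec) (V : vec -> R) : Prop :=
  forall x, O x -> exists r : R, 0 < r /\ exists L : R,
    forall y z, O y -> O z -> enorm (y - x) < r -> enorm (z - x) < r ->
      `|V y - V z| <= L * enorm (y - z).

Definition inner_semicontinuous_in (C : set vec) (F : vec -> set vec) : Prop :=
  forall x, C x -> forall f, F x f ->
    forall xk : nat -> vec, (forall k, C (xk k)) -> xk @ \oo --> x ->
      exists fk : nat -> vec, (forall k, F (xk k) (fk k)) /\ fk @ \oo --> f.

Definition locally_bounded_in (C : set vec) (F : vec -> set vec) : Prop :=
  forall x, C x -> exists r : R, 0 < r /\ exists M : R,
    forall y, C y -> enorm (y - x) < r -> forall f, F y f -> enorm f <= M.

End Defs.

(* Main.v *)
Require Import Defs.
From HB Require Import structures.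
From mathcomp Require Import all_boot all_order all_algebra.
From mathcomp Require Import all_classical all_reals all_analysis.
Import Order.TTheory GRing.Theory Num.Theory.
Import numFieldNormedType.Exports.
Local Open Scope classical_set_scope.
Local Open Scope ring_scope.
From mathcomp Require Import ring lra.
Section Aux.
Variables (R : realType) (n : nat).
Implicit Types (u v w : 'rV[R]_n).

Lemma dotpC u v : dotp u v = dotp v u.
Proof. by apply: eq_bigr => i _; rewrite mulrC. Qed.

Lemma dotpDl u v w : dotp (u + v) w = dotp u w + dotp v w.
Proof. by rewrite /dotp -big_split; apply: eq_bigr => i _; rewrite mxE mulrDl. Qed.

Lemma dotpZl (a : R) u w : dotp (a *: u) w = a * dotp u w.
Proof. by rewrite /dotp mulr_sumr; apply: eq_bigr => i _; rewrite mxE mulrA. Qed.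

Lemma dotpNl u w : dotp (- u) w = - dotp u w.
Proof. by rewrite -scaleN1r dotpZl mulN1r. Qed.

Lemma dotp0l w : dotp 0 w = 0.
Proof. by rewrite /dotp big1 // => i _; rewrite mxE mul0r. Qed.

Lemma dotp_ge0 u : 0 <= dotp u u.
Proof. by apply: sumr_ge0 => i _; rewrite -expr2 sqr_ge0. Qed.

Lemma dotp_eq0 u : dotp u u = 0 -> forall i, u 0 i = 0.
Proof.
move=> H i.
have h : forall j : 'I_n, true -> 0 <= u 0 j * u 0 j by move=> j _; rewrite -expr2 sqr_ge0.
by have /eqP := psumr_eq0P h H (i := i) isT; rewrite mulf_eq0 orbb => /eqP.
Qed.

Lemma CS u v : dotp u v ^+ 2 <= dotp u u * dotp v v.
Proof.
have [B0|Bn0] := eqVneq (dotp v v) 0.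
  have -> : dotp u v = 0.
    by rewrite /dotp big1 // => i _; rewrite (@dotp_eq0 v B0) mulr0.
  by rewrite expr0n /= mulr_ge0 // dotp_ge0.
have Bp : 0 < dotp v v by rewrite lt_def Bn0 dotp_ge0.
have := dotp_ge0 (dotp v v *: u - dotp u v *: v).
rewrite !dotpDl !dotpNl !dotpZl (dotpC _ (_ - _)) !dotpDl !dotpNl !dotpZl.
rewrite (dotpC v (_ - _)) !dotpDl !dotpNl !dotpZl (dotpC v u).
have -> : dotp v v * (dotp v v * dotp u u - dotp u v * dotp u v) -
    dotp u v * (dotp v v * dotp u v - dotp u v * dotp v v) =
    dotp v v * (dotp u u * dotp v v - dotp u v ^+ 2) by ring.
by rewrite pmulr_rge0 // subr_ge0.
Qed.

Lemma CS2 u v : dotp u v <= enorm u * enorm v.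
Proof.
rewrite /enorm -sqrtrM ?dotp_ge0 //.
apply: le_trans (ler_wsqrtr (CS u v)).
by rewrite sqrtr_sqr ler_norm.
Qed.

Lemma enorm_ge0 u : 0 <= enorm u.
Proof. exact: sqrtr_ge0. Qed.

Lemma enorm_triangle u v : enorm (u + v) <= enorm u + enorm v.
Proof.
rewrite -[enorm u + enorm v]ger0_norm ?addr_ge0 ?enorm_ge0 //.
rewrite -sqrtr_sqr /enorm ler_wsqrtr //.
rewrite sqrrD !sqr_sqrtr ?dotp_ge0 //.
rewrite dotpDl (dotpC u) (dotpC v) !dotpDl (dotpC v u).
have := CS2 u v; rewrite /enorm => h.
rewrite mulr2n; lra.
Qed.

Lemma enormN u : enorm (- u) = enorm u.
Proof. by rewrite /enorm dotpNl dotpC dotpNl opprK. Qed.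

End Aux.
Section Dist.
Variables (R : realType) (n : nat).
Implicit Types (x y : 'rV[R]_n) (A : set 'rV[R]_n).

Lemma dist_lb A x : has_lbound [set enorm (x - y) | y in A].
Proof. by exists 0 => _ [y _ <-]; exact: enorm_ge0. Qed.

Lemma dist_ge0 A x : A !=set0 -> 0 <= dist_set A x.
Proof.
move=> [a Aa]; apply: lb_le_inf; first by exists (enorm (x - a)), a.
by move=> _ [y _ <-]; exact: enorm_ge0.
Qed.

Lemma dist_le A x y : A !=set0 -> dist_set A x <= dist_set A y + enorm (x - y).
Proof.
move=> [a Aa]; rewrite -lerBlDr; apply: lb_le_inf; first by exists (enorm (y - a)), a.
move=> _ [b Ab <-]; rewrite lerBlDr.
apply: le_trans (_ : enorm (x - b) <= _).
  by apply: ge_inf; [exact: dist_lb | exists b].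
have -> : x - b = (y - b) + (x - y) by rewrite [RHS]addrC addrA subrK.
exact: enorm_triangle.
Qed.

Lemma dist_lip A x y : A !=set0 -> `|dist_set A x - dist_set A y| <= enorm (x - y).
Proof.
move=> A0; rewrite ler_norml; apply/andP; split.
  have := dist_le A x y A0; rewrite -enormN opprB; have := dist_le A y x A0. lra.
have := dist_le A x y A0; lra.
Qed.

End Dist.
Section Cvg.
Variables (R : realType) (n : nat).

Lemma cvg_coord (u : nat -> 'rV[R]_n) (l : 'rV[R]_n) i :
  u @ \oo --> l -> (fun k => u k 0 i) @ \oo --> l 0 i.
Proof.
move=> H.
exact: (@continuous_cvg _ _ _ _ _ u (fun M : 'rV[R]_n => M 0 i) l
  (@coord_continuous R 1 n 0 i l) H).
Qed.

Lemma cvg_bigsum (I : Type) (s : seq I) (G : I -> nat -> R) (L : I -> R) :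
  (forall i, G i @ \oo --> L i) ->
  (fun k => \sum_(i <- s) G i k) @ \oo --> \sum_(i <- s) L i.
Proof.
move=> H; elim: s => [|a s IH].
  rewrite big_nil.
  have -> : (fun k => \sum_(i <- [::]) G i k) = (fun _ => 0) .
    by apply/funext => k; rewrite big_nil.
  exact: cvg_cst.
rewrite big_cons.
have -> : (fun k => \sum_(i <- a :: s) G i k) = (G a + (fun k => \sum_(i <- s) G i k)).
  by apply/funext => k; rewrite big_cons.
exact: cvgD.
Qed.

Lemma cvg_dotp (u w : nat -> 'rV[R]_n) (lu lw : 'rV[R]_n) :
  u @ \oo --> lu -> w @ \oo --> lw ->
  (fun k => dotp (u k) (w k)) @ \oo --> dotp lu lw.
Proof.
move=> Hu Hw; rewrite /dotp.
apply: (@cvg_bigsum _ _ (fun i k => u k 0 i * w k 0 i)) => i.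
by apply: cvgM; apply: cvg_coord.
Qed.

Lemma cvg_enorm0 (u : nat -> 'rV[R]_n) (l : 'rV[R]_n) :
  u @ \oo --> l -> (fun k => enorm (u k - l)) @ \oo --> 0.
Proof.
move=> Hu.
have H0 : (fun k => u k - l) @ \oo --> (l - l).
  by apply: cvgB => //; exact: cvg_cst.
rewrite subrr in H0.
have := @cvg_dotp _ _ 0 0 H0 H0; rewrite dotp0l => Hd.
rewrite -(sqrtr0 R).
exact: (continuous_cvg _ (@sqrt_continuous R 0) Hd).
Qed.

Lemma cvg_dist (A : set 'rV[R]_n) (u : nat -> 'rV[R]_n) (l : 'rV[R]_n) :
  A !=set0 -> u @ \oo --> l ->
  (fun k => dist_set A (u k)) @ \oo --> dist_set A l.
Proof.
move=> A0 Hu; have He := @cvg_enorm0 u l Hu.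
apply/cvgrPdist_lt => e e0.
move/cvgrPdist_lt: He => /(_ e e0).
apply: filterS => k; rewrite sub0r normrN ger0_norm ?enorm_ge0 //.
apply: le_lt_trans.
by rewrite distrC dist_lip.
Qed.

End Cvg.
Lemma gamma_cvg (R : realType) (gamma : R -> R) (t : nat -> R) (l : R) :
  {within [set t : R | 0 <= t], continuous gamma} ->
  (forall k, 0 <= t k) -> 0 <= l -> t @ \oo --> l ->
  (fun k => gamma (t k)) @ \oo --> gamma l.
Proof.
move=> Hg Ht Hl Htl.
have := (subspace_continuousP _ gamma).1 Hg l Hl => Hw.
apply: (cvg_comp t gamma _ Hw).
move=> P /= HP.
have H := Htl _ HP.
exact: (@filterS _ _ _ (fun k => 0 <= t k -> P (t k)) _ (fun k Hk => Hk (Ht k)) H).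
Qed.

Lemma dotp_suml (R : realType) (n : nat) m (w : 'I_m -> R) (p : 'I_m -> 'rV[R]_n) f :
  dotp (\sum_(i < m) w i *: p i) f = \sum_(i < m) w i * dotp (p i) f.
Proof.
rewrite (big_morph (fun u => dotp u f) (fun u v => @dotpDl R n u v f) (@dotp0l R n f)).
by apply: eq_bigr => i _; rewrite dotpZl.
Qed.

Theorem proposition1 (R : realType) (n : nat) (O : set 'rV[R]_n)
  (V : 'rV[R]_n -> R) (F : 'rV[R]_n -> set 'rV[R]_n) (A : set 'rV[R]_n)
  (gamma : R -> R) :
  open O ->
  locally_lipschitz_on O V ->
  inner_semicontinuous_in O F ->
  locally_bounded_in O F ->
  closed A -> A !=set0 ->
  {within [set t : R | 0 <= t], continuous gamma} ->
  (forall y, O y -> ~ nondiff_set O V y ->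
     forall f, F y f -> dotp (grad V y) f <= gamma (dist_set A y)) ->
  forall x, O x -> forall v, clarke_grad O V x v -> forall f, F x f ->
    dotp v f <= gamma (dist_set A x).
Proof.
move=> _ _ Hisc _ _ A0 Hg Hyp x Ox v [m [w [p [w0 [w1 [Sp ->]]]]]] f Ff.
have key : forall i, dotp (p i) f <= gamma (dist_set A x).
  move=> i; have [xk [Hxk [Hk Hgr]]] := Sp i.
  have [fk [Ffk Hfk]] := Hisc x Ox f Ff xk (fun k => (Hk k).1) Hxk.
  apply: (ler_cvg_to (@cvg_dotp R n _ _ _ _ Hgr Hfk)
           (@gamma_cvg R gamma _ _ Hg (fun k => @dist_ge0 R n A (xk k) A0) (@dist_ge0 R n A x A0)
              (@cvg_dist R n A xk x A0 Hxk))).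
  by apply: nearW => k; apply: Hyp; [exact: (Hk k).1 | exact: (Hk k).2 | exact: Ffk].
rewrite dotp_suml.
apply: le_trans (_ : \sum_(i < m) w i * gamma (dist_set A x) <= _).
  by apply: ler_sum => i _; apply: ler_wpM2l.
by rewrite -mulr_suml w1 mul1r.
Qed.
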